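(* Place the almost positive roots of type $C_n$ in the off-diagonal entries of an $(n+1)\times(n+1)$ array via: entry $(1,j)$ ($2\le j\le n+1$) is $-\alpha_{j-1}$; entry $(i,j)$ with $2\le i<j$ is $\varepsilon_{i-1}-\varepsilon_{j-1}$; entry $(i,j)$ with $i>j$ is $\varepsilon_j+\varepsilon_{i-1}$. Then any two almost positive roots lying in the same row or in the same column of this array are $\underline c$-compatible.
   Context: Type $C_n$: standard basis $\varepsilon_i$ of $\mathbb{R}^n$, simple roots $\alpha_i=\varepsilon_i-\varepsilon_{i+1}$ ($i<n$), $\alpha_n=2\varepsilon_n$, $\Pi$ the simple roots, $\Phi_+=\{\varepsilon_i\pm\varepsilon_j:i<j\}\cup\{2\varepsilon_i\}$, $\Phi_{\ge-1}=\Phi_+\sqcup(-\Pi)$. With simple reflections $s_i$ and $c=s_1\cdots s_n$, $\tau:\Phi_{\ge-1}\to\Phi_{\ge-1}$ is $\tau(-\alpha_i)=s_1\cdots s_{i-1}(\alpha_i)$, $\tau(s_n\cdots s_{i+1}(\alpha_i))=-\alpha_i$, $\tau(\alpha)=c(\alpha)$ otherwise. The $\underline c$-compatibility degree is the unique $\tau$-invariant function $\Phi_{\ge-1}^2\to\mathbb{Z}$ with $(-\alpha\|_{\underline c}-\alpha')=0$ for $\alpha,\alpha'\in\Pi$ and $(-\alpha\|_{\underline c}\beta)=[\beta:\alpha]$ (coefficient of $\alpha$ in $\beta$) for $\alpha\in\Pi,\beta\in\Phi_+$; two roots are $\underline c$-compatible if their degree is $0$. *)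

(* Defs.v *)
From HB Require Import structures.
From mathcomp Require Import all_boot all_order all_algebra.
Set Implicit Arguments. Unset Strict Implicit. Unset Printing Implicit Defensive.
Import Order.TTheory GRing.Theory Num.Theory.
Local Open Scope ring_scope.

Section TypeC.
Variable n : nat.
Local Notation vec := 'rV[rat]_n.

(* standard basis vector eps_k, 0-based index k (paper's eps_{k+1}) *)
Definition eps (k : nat) : vec := \row_(j < n) (if (j : nat) == k then 1 else 0).

Definition alpha (k : nat) : vec :=
  if (k.+1 < n)%N then eps k - eps k.+1 else 2 *: eps k.

Definition dot (u v : vec) : rat := \sum_(j < n) u 0 j * v 0 j.

Definition sref (k : nat) (v : vec) : vec :=
  v - (2 * dot v (alpha k) / dot (alpha k) (alpha k)) *: alpha k.

(* apply s_{k1} s_{k2} ... s_{km} (composition, rightmost first) to v *)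
Definition sword (w : seq nat) (v : vec) : vec := foldr sref v w.

Definition cox (v : vec) : vec := sword (iota 0 n) v.

(* s_1 ... s_{i-1} (alpha_i) in 0-based indices: s_0 ... s_{i-1} (alpha i) *)
Definition tau_neg_img (i : 'I_n) : vec := sword (iota 0 i) (alpha i).
(* s_n ... s_{i+1} (alpha_i): 0-based s_{n-1} ... s_{i+1} (alpha i) *)
Definition tau_pre_neg (i : 'I_n) : vec := sword (rev (iota i.+1 (n - i.+1))) (alpha i).

Definition tau (v : vec) : vec :=
  match [pick i : 'I_n | v == - alpha i] with
  | Some i => tau_neg_img i
  | None =>
    match [pick i : 'I_n | v == tau_pre_neg i] with
    | Some i => - alpha i
    | None => cox v
    end
  end.

Definition pos_root (v : vec) : Prop :=
  (exists (i j : 'I_n), (i < j)%N /\ (v = eps i - eps j \/ v = eps i + eps j))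
  \/ exists i : 'I_n, v = 2 *: eps i.

Definition ap_root (v : vec) : Prop := pos_root v \/ exists i : 'I_n, v = - alpha i.

(* The c-compatibility degree characterization: f is tau-invariant on
   Phi_{>=-1} and satisfies the initial conditions. *)
Definition is_compat_degree (f : vec -> vec -> int) : Prop :=
  [/\ forall a b, ap_root a -> ap_root b -> f (tau a) (tau b) = f a b,
      forall i j : 'I_n, f (- alpha i) (- alpha j) = 0 &
      forall (i : 'I_n) (b : vec) (c : 'I_n -> rat),
        pos_root b -> b = \sum_(j < n) c j *: alpha j -> (f (- alpha i) b)%:~R = c i].

(* the (n+1)x(n+1) array, 0-based row r and column s (paper's r+1, s+1) *)
Definition entry (r s : 'I_n.+1) : vec :=
  if (r : nat) == 0%N then - alpha (s.-1)
  else if (r < s)%N then eps (r.-1) - eps (s.-1)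
  else eps s + eps (r.-1).

End TypeC.

(* Main.v *)
Require Import Defs.
From HB Require Import structures.
From mathcomp Require Import all_boot all_order all_algebra.
From mathcomp Require Import zify ring lra.
Import Order.TTheory GRing.Theory Num.Theory.
Local Open Scope ring_scope.

Ltac vsolve := apply/rowP => t;
  repeat (rewrite ?mxE /=; first [case: eqP => ? | case: ifP => ?]); rewrite ?mxE /=;
  try (exfalso; lia); try (clear; lra); try (apply/eqP; vm_compute; reflexivity).
Ltac numfalse := let H := fresh "Hc" in intro H; exfalso; revert H; clear; first [intro H; lra | move/eqP; vm_compute; by []].
Ltac numfalse2 := let H1 := fresh "Hc" in let H2 := fresh "Hc" in intros H1 H2; exfalso; revert H1 H2; clear; intros H1 H2; lra.
Ltac csolve := repeat (rewrite ?mxE /=; first [case: eqP => ? | case: ifP => ?]); first [intros; lia | numfalse | numfalse2].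

Section S.
Variable n : nat.
Local Notation E := (eps n).
Local Notation A := (alpha n).
Local Notation vec := ('rV[rat]_n).
Implicit Types u v w : vec.

Lemma epsE a (t : 'I_n) : E a 0 t = if (t : nat) == a then 1 else 0.
Proof. by rewrite mxE. Qed.

Lemma dot_epsl a v (ha : (a < n)%N) : dot (E a) v = v 0 (Ordinal ha).
Proof.
rewrite /dot (bigD1 (Ordinal ha)) //= big1 ?addr0 ?mxE ?eqxx ?mul1r //.
move=> j /eqP hj; rewrite mxE; case: eqP => h; last by rewrite mul0r.
by case: hj; apply: val_inj.
Qed.

Lemma dotDl u v w : dot (u + v) w = dot u w + dot v w.
Proof. by rewrite /dot -big_split; apply: eq_bigr => j _; rewrite mxE mulrDl. Qed.
Lemma dotZl c u w : dot (c *: u) w = c * dot u w.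
Proof. by rewrite /dot mulr_sumr; apply: eq_bigr => j _; rewrite mxE mulrA. Qed.
Lemma dotNl u w : dot (- u) w = - dot u w.
Proof. by rewrite -scaleN1r dotZl mulN1r. Qed.
Lemma dotBl u v w : dot (u - v) w = dot u w - dot v w.
Proof. by rewrite dotDl dotNl. Qed.

Lemma dotZr c u w : dot u (c *: w) = c * dot u w.
Proof. by rewrite /dot mulr_sumr; apply: eq_bigr => j _; rewrite mxE mulrCA. Qed.

Lemma srefD k u v : sref k (u + v) = sref k u + sref k v.
Proof. rewrite /sref dotDl mulrDr mulrDl scalerDl; apply/rowP => t; rewrite !mxE; ring. Qed.
Lemma srefZ k c u : sref k (c *: u) = c *: sref k u.
Proof. rewrite /sref dotZl; apply/rowP => t; rewrite !mxE. ring. Qed.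
Lemma srefN k u : sref k (- u) = - sref k u.
Proof. by rewrite -scaleN1r srefZ scaleN1r. Qed.
Lemma srefB k u v : sref k (u - v) = sref k u - sref k v.
Proof. by rewrite srefD srefN. Qed.

Lemma swordD (w : seq nat) u v : sword w (u + v) = sword w u + sword w v.
Proof. by elim: w => //= k w IH; rewrite IH srefD. Qed.
Lemma swordZ (w : seq nat) c u : sword w (c *: u) = c *: sword w u.
Proof. by elim: w => //= k w IH; rewrite IH srefZ. Qed.
Lemma swordN (w : seq nat) u : sword w (- u) = - sword w u.
Proof. by rewrite -scaleN1r swordZ scaleN1r. Qed.
Lemma swordB (w : seq nat) u v : sword w (u - v) = sword w u - sword w v.
Proof. by rewrite swordD swordN. Qed.


Lemma sref_eps k a (hk : (k < n)%N) (ha : (a < n)%N) :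
  sref k (E a) = if (k.+1 < n)%N then
     (if a == k then E k.+1 else if a == k.+1 then E k else E a)
   else (if a == k then - E a else E a).
Proof.
rewrite /sref /alpha; case: ifP => hk1.
  rewrite dotBl !dot_epsl //.
  case: eqP => hak; [|case: eqP => hak1]; vsolve.
rewrite ?dotZl ?dotZr !dot_epsl //.
case: eqP => hak; vsolve.
Qed.

Lemma sref_fix k a : (k < n)%N -> (a < n)%N -> a != k -> a != k.+1 -> sref k (E a) = E a.
Proof.
move=> hk ha /negbTE h1 /negbTE h2; rewrite sref_eps // h1 h2; by case: ifP.
Qed.

Lemma sword_fix (w : seq nat) a : (a < n)%N ->
  all (fun k => [&& (k < n)%N, a != k & a != k.+1]) w -> sword w (E a) = E a.
Proof.
move=> ha; elim: w => //= k w IH /andP [/and3P [hk h1 h2] hw].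
by rewrite IH // sref_fix.
Qed.

Lemma sword_cat (w1 w2 : seq nat) v : sword (w1 ++ w2) v = sword w1 (sword w2 v).
Proof. by rewrite /sword foldr_cat. Qed.

Lemma iotaS0 i : iota 0 i.+1 = iota 0 i ++ [:: i].
Proof. by rewrite -addn1 iotaD. Qed.

Lemma sword_iota0 i : (i < n)%N -> sword (iota 0 i) (E i) = E 0.
Proof.
elim: i => // i IH hi.
rewrite iotaS0 sword_cat /= sref_eps ?hi ?(ltnW hi) //.
have -> : (i.+1 == i) = false by lia.
by rewrite /= eqxx IH // ltnW.
Qed.

Lemma cox_eps a : (a.+1 < n)%N -> cox (E a) = E a.+1.
Proof.
move=> ha; rewrite /cox.
have -> : iota 0 n = iota 0 a.+1 ++ iota a.+1 (n - a.+1).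
  by rewrite -iotaD subnKC // ltnW.
rewrite sword_cat.
rewrite (@sword_fix (iota a.+1 (n - a.+1))); last first.
  apply/allP => k; rewrite mem_iota => /andP [h1 h2]; apply/and3P; split; lia.
  lia.
rewrite iotaS0 sword_cat /= sref_eps ?ha ?eqxx //; last lia.
apply: sword_fix => //; apply/allP => k; rewrite mem_iota => /andP [h1 h2]; apply/and3P; split; lia.
lia.
Qed.

Lemma cox_last : (0 < n)%N -> cox (E n.-1) = - E 0.
Proof.
move=> hn; rewrite /cox.
have -> : iota 0 n = iota 0 n.-1 ++ [:: n.-1] by rewrite -iotaS0 prednK.
rewrite sword_cat /= sref_eps; try lia.
rewrite prednK // ltnn eqxx swordN sword_iota0 //; lia.
Qed.


Lemma tni (i : 'I_n) : tau_neg_img i = if (i.+1 < n)%N then E 0 - E i.+1 else 2 *: E 0.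
Proof.
rewrite /tau_neg_img /alpha; case: ifP => hi.
  rewrite swordB sword_iota0 // sword_fix //.
  apply/allP => k; rewrite mem_iota => /andP [h1 h2]; apply/and3P; split; lia.
by rewrite swordZ sword_iota0.
Qed.

Lemma revS x y : rev (iota x y.+1) = (x + y)%N :: rev (iota x y).
Proof. by rewrite -addn1 iotaD rev_cat. Qed.

Lemma sword_rev x y : (x + y < n)%N -> sword (rev (iota x y)) (E x) = E (x + y).
Proof.
elim: y => [|y IH] h; first by rewrite addn0.
rewrite revS /= IH; last lia.
rewrite sref_eps; try lia.
have -> : ((x + y).+1 < n)%N = true by lia.
by rewrite eqxx addnS.
Qed.

Lemma tpn (i : 'I_n) : tau_pre_neg i = E i + E n.-1.
Proof.
have hi := ltn_ord i.
rewrite /tau_pre_neg /alpha; case: ifP => hi1.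
  rewrite swordB sword_fix; last first.
    apply/allP => k; rewrite mem_rev mem_iota => /andP [h1 h2]; apply/and3P; split; lia.
    done.
  have -> : (n - i.+1 = (n.-1 - i.+1).+1)%N by lia.
  rewrite revS /= sword_rev; last lia.
  have -> : (i.+1 + (n.-1 - i.+1) = n.-1)%N by lia.
  rewrite sref_eps; try lia.
  have -> : (n.-1.+1 < n)%N = false by lia.
  rewrite eqxx; vsolve.
have -> : (n - i.+1 = 0)%N by lia.
have -> : (nat_of_ord i = n.-1) by lia.
vsolve.
Qed.


Lemma cox_epsG a : (a < n)%N -> cox (E a) = if (a.+1 < n)%N then E a.+1 else - E 0.
Proof.
move=> ha; case: ifP => h; first exact: cox_eps.
have -> : a = n.-1 by lia.
apply: cox_last; lia.
Qed.

Lemma coxB u v : cox (u - v) = cox u - cox v.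
Proof. exact: swordB. Qed.
Lemma coxD u v : cox (u + v) = cox u + cox v.
Proof. exact: swordD. Qed.

Definition R j m : vec := if m == 0%N then - A j
  else if (m <= n.-1 - j)%N then E m.-1 - E (j + m) else E (m + j - n) + E m.-1.

Lemma coordE {u v} (H : u = v) {x} (hx : (x < n)%N) : u 0 (Ordinal hx) = v 0 (Ordinal hx).
Proof. by rewrite H. Qed.

Lemma tauR j m : (j < n)%N -> (m <= n)%N -> tau (R j m) = R j (if m == n then 0 else m.+1).
Proof.
move=> hj hm; rewrite /tau.
case: (posnP m) => [->|m0].
  have -> : (0 == n) = false by lia.
  rewrite /R eqxx /=.
  case: pickP => [i /eqP Hi|Hn]; last first.
    by have := Hn (Ordinal hj); rewrite eqxx.
  have hi := ltn_ord i.
  have : nat_of_ord i = j.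
    move: (coordE Hi hj); clear Hi; rewrite /alpha !mxE /=; csolve.
  move=> hij; rewrite tni hij /R /=; vsolve.
have hm0 : (m == 0) = false by lia.
have hm1 : (m.-1 < n)%N by lia.
case: pickP => [i /eqP Hi | Hn1].
  exfalso; have hi := ltn_ord i.
  move: (coordE Hi hi) (coordE Hi hm1); clear Hi; rewrite /R /alpha hm0; csolve.
have hn1 : (n.-1 < n)%N by lia.
case: eqP => hmn.
  case: pickP => [i /eqP Hi | Hn2].
    have hi := ltn_ord i.
    have : nat_of_ord i = j.
      move: (coordE Hi hi); rewrite tpn; clear Hi; rewrite /R hm0; csolve.
    by move=> hij; rewrite /R eqxx hij.
  have := Hn2 (Ordinal hj); rewrite tpn /R hm0 => /eqP []; vsolve.
case: pickP => [i /eqP Hi | Hn2].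
  exfalso; move: (coordE Hi hn1); rewrite tpn; clear Hi; rewrite /R hm0; csolve.
rewrite /R hm0 /=.
case: ifP => h1.
  rewrite coxB !cox_epsG; try lia.
  vsolve.
rewrite coxD !cox_epsG; try lia.
vsolve.
Qed.

Lemma posR j m : (j < n)%N -> (0 < m <= n)%N -> pos_root (R j m).
Proof.
move=> hj /andP [m0 hm].
have hm0 : (m == 0) = false by lia.
rewrite /pos_root /R hm0; case: ifP => h.
  have h1 : (m.-1 < n)%N by lia.
  have h2 : (j + m < n)%N by lia.
  left; exists (Ordinal h1), (Ordinal h2); split => /=; [lia | by left].
have h1 : (m + j - n < n)%N by lia.
have h2 : (m.-1 < n)%N by lia.
case: (ltngtP (m + j - n) m.-1) => hx; first by left; exists (Ordinal h1), (Ordinal h2); split => /=; [lia | by right].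
  lia.
right; exists (Ordinal h2) => /=; rewrite hx; vsolve.
Qed.

Lemma apR j m : (j < n)%N -> (m <= n)%N -> ap_root (R j m).
Proof.
move=> hj hm; case: (posnP m) => [->|m0].
  by right; exists (Ordinal hj); rewrite /R eqxx.
left; apply: posR => //; lia.
Qed.

Definition nx p := if p == n then 0%N else p.+1.

Lemma iter_nx k p : (p <= n)%N -> (k <= n.+1)%N ->
  iter k nx p = if (p + k <= n)%N then (p + k)%N else (p + k - n.+1)%N.
Proof.
move=> hp; elim: k => [|k IH] hk /=; first by rewrite addn0 hp.
rewrite IH; last lia.
case: (ifP (p + k <= n)%N) => h1; rewrite /nx; repeat (first [case: eqP => ? | case: ifP => ?]); lia.
Qed.

Definition ind x y (j : nat) : rat := if (x <= j < y)%N then 1 else 0.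

Lemma delta_sum (F : nat -> vec) y : (y < n)%N ->
  \sum_(j < n) (if (j : nat) == y then 1 else 0) *: F j = F y.
Proof.
move=> hy; rewrite (bigD1 (Ordinal hy)) //= eqxx scale1r big1 ?addr0 //.
move=> j /eqP hj; case: eqP => h; last by rewrite scale0r.
by case: hj; apply: val_inj.
Qed.

Lemma SD x y : (x <= y)%N -> (y < n)%N -> E x - E y = \sum_(j < n) ind x y j *: A j.
Proof.
move=> hxy; elim: y hxy => [|y IH] hxy hy.
  have -> : x = 0%N by lia.
  rewrite subrr big1 // => j _; rewrite /ind (_ : (_ <= _ < _)%N = false) ?scale0r //; lia.
case: (ltnP y x) => hyx.
  have -> : x = y.+1 by lia.
  rewrite subrr big1 // => j _; rewrite /ind (_ : (_ <= _ < _)%N = false) ?scale0r //; lia.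
rewrite (eq_bigr (fun j : 'I_n => ind x y j *: A j + (if (j : nat) == y then 1 else 0) *: A j)); last first.
  move=> j _; rewrite -scalerDl /ind; congr (_ *: _).
  case: ifP => h1; case: ifP => h2; case: eqP => h3; try lia; rewrite ?addr0 ?add0r //.
rewrite big_split /= delta_sum; last lia.
rewrite -IH //; last lia.
rewrite /alpha hy; vsolve.
Qed.

Lemma SS x y : (x <= y)%N -> (y < n)%N -> E x + E y =
  \sum_(j < n) (ind x y j + 2 * ind y n.-1 j + ind n.-1 n j) *: A j.
Proof.
move=> hxy hy.
rewrite (eq_bigr (fun j : 'I_n => ind x y j *: A j + (2 *: (ind y n.-1 j *: A j) +
   (if (j : nat) == n.-1 then 1 else 0) *: A j))); last first.
  move=> j _; rewrite scalerA -!scalerDl -addrA; congr ((_ + (_ + _)) *: _).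
  rewrite /ind; have := ltn_ord j; case: ifP => h1; case: eqP => h2; move=> hj; first [by [] | exfalso; lia].
rewrite big_split /= big_split /= -scaler_sumr delta_sum; last lia.
rewrite -SD // -SD //; try lia.
rewrite /alpha; have -> : (n.-1.+1 < n)%N = false by lia.
vsolve.
Qed.

Definition J (r s : nat) := if (r < s)%N then (s - r - 1)%N else (s + n - r)%N.

Lemma entryR (r s : 'I_n.+1) : r != s -> entry r s = R (J r s) r.
Proof.
have hr := ltn_ord r; have hs := ltn_ord s.
move=> /eqP hrs; have hrs' : (r : nat) <> s by move=> h; apply: hrs; apply: val_inj.
case: (boolP (r < s)%N) => hlt; rewrite /entry /R /J ?hlt ?(negbTE hlt) /alpha; vsolve.
Qed.

Lemma J_lt (r s : 'I_n.+1) : r != s -> (J r s < n)%N.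
Proof.
have hr := ltn_ord r; have hs := ltn_ord s.
move=> /eqP hrs; have hrs' : (r : nat) <> s by move=> h; apply: hrs; apply: val_inj.
rewrite /J; case: ifP => h; lia.
Qed.

Lemma nx_le p : (p <= n)%N -> (nx p <= n)%N.
Proof. rewrite /nx; case: eqP => h; lia. Qed.

Lemma iter_le k p : (p <= n)%N -> (iter k nx p <= n)%N.
Proof. by move=> hp; elim: k => //= k IH; apply: nx_le. Qed.

Lemma CL (f : vec -> vec -> int)
  (H3 : forall (i : 'I_n) (b : vec) (c : 'I_n -> rat), pos_root b ->
        b = \sum_(j < n) c j *: alpha n j -> (f (- alpha n i) b)%:~R = c i)
  a b m (ha : (a < n)%N) : (b < n)%N -> (0 < m <= n)%N ->
  (a = b + m \/ a + n.+1 = b + m)%N -> f (- A a) (R b m) = 0.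
Proof.
move=> hb hm hab.
suff: ((f (- A a) (R b m))%:~R : rat) = 0 by move/eqP; rewrite intr_eq0 => /eqP.
have hp := @posR b m hb hm.
change (((f (- alpha n (Ordinal ha)) (R b m))%:~R : rat) = 0).
have hm0 : (m == 0) = false by lia.
case: (boolP (m <= n.-1 - b)%N) => h; [|move/negbTE: h => h].
  rewrite (H3 (Ordinal ha) _ (fun j => ind m.-1 (b + m) j)) //=.
    rewrite /ind (_ : (_ <= _ < _)%N = false) //; lia.
  rewrite /R hm0 h; apply: SD; lia.
rewrite (H3 (Ordinal ha) _ (fun j => ind (m + b - n) m.-1 j + 2 * ind m.-1 n.-1 j + ind n.-1 n j)) //=.
  rewrite /ind.
  have -> : (m + b - n <= a < m.-1)%N = false by lia.
  have -> : (m.-1 <= a < n.-1)%N = false by lia.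
  have -> : (n.-1 <= a < n)%N = false by lia.
  by rewrite mulr0 !addr0.
rewrite /R hm0 h; apply: SS; lia.
Qed.

End S.

Theorem lemma4p7 (n : nat) (f : 'rV[rat]_n -> 'rV[rat]_n -> int) :
  is_compat_degree f ->
  (forall r s1 s2 : 'I_n.+1, r != s1 -> r != s2 -> s1 != s2 ->
     f (entry r s1) (entry r s2) = 0) /\
  (forall s r1 r2 : 'I_n.+1, r1 != s -> r2 != s -> r1 != r2 ->
     f (entry r1 s) (entry r2 s) = 0).
Proof.
case=> H1 H2 H3.
have SH : forall k a b p q, (a < n)%N -> (b < n)%N -> (p <= n)%N -> (q <= n)%N ->
    f (R n a p) (R n b q) = f (R n a (iter k (nx n) p)) (R n b (iter k (nx n) q)).
  elim=> [//|k IH] a b p q ha hb hp hq.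
  rewrite IH //= -!tauR ?iter_le // H1 //; apply: apR => //; exact: iter_le.
split.
  move=> r s1 s2 h1 h2 h3.
  have hr := ltn_ord r.
  have ha := @J_lt n _ _ h1; have hb := @J_lt n _ _ h2.
  rewrite !entryR // (SH (n.+1 - r)%N) //; try lia.
  rewrite !iter_nx; try lia.
  have -> : (r + (n.+1 - r) <= n)%N = false by lia.
  have -> : (r + (n.+1 - r) - n.+1 = 0)%N by lia.
  rewrite /R eqxx.
  exact: (H2 (Ordinal ha) (Ordinal hb)).
move=> s r1 r2 h1 h2 h3.
have hr1 := ltn_ord r1; have hr2 := ltn_ord r2; have hs := ltn_ord s.
have ha := @J_lt n _ _ h1; have hb := @J_lt n _ _ h2.
have h1' : (r1 : nat) <> s by move=> h; move/eqP: h1; apply; apply: val_inj.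
have h2' : (r2 : nat) <> s by move=> h; move/eqP: h2; apply; apply: val_inj.
have h3' : (r1 : nat) <> r2 by move=> h; move/eqP: h3; apply; apply: val_inj.
rewrite !entryR // (SH (n.+1 - r1)%N) //; try lia.
rewrite !iter_nx; try lia.
have -> : (r1 + (n.+1 - r1) <= n)%N = false by lia.
have -> : (r1 + (n.+1 - r1) - n.+1 = 0)%N by lia.
rewrite {1}/R eqxx.
apply: (@CL n f H3 _ _ _ ha hb).
  case: (leqP (r2 + (n.+1 - r1)) n) => ?; lia.
rewrite /J; case: (ltnP r1 s) => ?; case: (ltnP r2 s) => ?;
  case: (leqP (r2 + (n.+1 - r1)) n) => ?; lia.
Qed.
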